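(* Let $n\ge2$ be an integer, $\sigma\ge0$, $R'>0$, and define $a_1=\frac{n}{2R'}$, $a_2=\frac{a_1}{n-1}$, $a_k=\min\big\{(1+\frac1{n-1})a_{k-1},\frac{\sqrt{n(n+\sigma A_{k-1})}}{2R'}\big\}$ for $k\ge3$, where $A_k=\sum_{i=1}^ka_i$. Let $k_0=\big\lceil\frac{\log B_{n,\sigma,R'}}{\log n-\log(n-1)}\big\rceil$ with $B_{n,\sigma,R'}=\frac{\sigma n(n-1)}{4R'}+\sqrt{(\frac{\sigma n(n-1)}{4R'})^2+n^2}$. Then for all $k>k_0$, $A_k\ge c(k-k_0+n-1)^2$, where $c=\frac{(n-1)^2\sigma}{(4R')^2n}$. *)

(* Defs.v *)
From Stdlib Require Import Reals ZArith.
Open Scope R_scope.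

(* aA n sigma Rp k = (a_k, A_k), for k >= 1; index 0 is an unused dummy (0,0). *)
Fixpoint aA (n : nat) (sigma Rp : R) (k : nat) : R * R :=
  match k with
  | O => (0, 0)
  | S O => (INR n / (2 * Rp), INR n / (2 * Rp))
  | S (S O) =>
      let a1 := INR n / (2 * Rp) in
      let a2 := a1 / (INR n - 1) in (a2, a1 + a2)
  | S k' =>
      let p := aA n sigma Rp k' in
      let ak := Rmin ((1 + 1 / (INR n - 1)) * fst p)
                     (sqrt (INR n * (INR n + sigma * snd p)) / (2 * Rp)) in
      (ak, snd p + ak)
  end.

Definition a_seq n sigma Rp k := fst (aA n sigma Rp k).
Definition A_seq n sigma Rp k := snd (aA n sigma Rp k).

Definition B_const (n : nat) (sigma Rp : R) : R :=
  let t := sigma * INR n * (INR n - 1) / (4 * Rp) in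
  t + sqrt (t ^ 2 + INR n ^ 2).

Definition c_const (n : nat) (sigma Rp : R) : R :=
  (INR n - 1) ^ 2 * sigma / ((4 * Rp) ^ 2 * INR n).

(* Main.v *)
Require Import Defs.
From Stdlib Require Import Reals ZArith Lra Lia Psatz.
Open Scope R_scope.

Lemma aA_S n s Rp k : (2 <= k)%nat ->
  a_seq n s Rp (S k) = Rmin ((1 + 1 / (INR n - 1)) * a_seq n s Rp k)
                     (sqrt (INR n * (INR n + s * A_seq n s Rp k)) / (2 * Rp)) /\
  A_seq n s Rp (S k) = A_seq n s Rp k + a_seq n s Rp (S k).
Proof.
  intros H. destruct k as [|[|k]]; try lia. unfold a_seq, A_seq. simpl. auto.
Qed.

Lemma sqrt_ge y X : 0 <= y -> y * y <= X -> y <= sqrt X.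
Proof. intros H1 H2. rewrite <- (sqrt_square y) by exact H1. now apply sqrt_le_1_alt. Qed.

Lemma sqrt_gt y X : 0 <= y -> y * y < X -> y < sqrt X.
Proof. intros H1 H2. rewrite <- (sqrt_square y) by exact H1. apply sqrt_lt_1_alt.
  split; [nra|exact H2]. Qed.

Theorem proposition3 (n : nat) (sigma Rp : R) :
  (2 <= n)%nat -> 0 <= sigma -> 0 < Rp ->
  forall k0 : Z,
    (* k0 = ceiling of ln B / (ln n - ln (n-1)) *)
    IZR k0 - 1 < ln (B_const n sigma Rp) / (ln (INR n) - ln (INR n - 1)) <= IZR k0 ->
    forall k : nat, (k0 < Z.of_nat k)%Z ->
      A_seq n sigma Rp k >= c_const n sigma Rp * (INR k - IZR k0 + INR n - 1) ^ 2.
Proof.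
  intros Hn Hs HR k0 Hk0 k Hk.
  set (N := INR n) in *.
  assert (HN : 2 <= N) by (unfold N; change 2 with (INR 2); apply le_INR; exact Hn).
  set (m := N - 1) in *.
  set (q := 1 + 1 / m).
  assert (Hm : 1 <= m) by (unfold m; lra).
  assert (Hqm : q * m = N) by (unfold q, m; field; unfold m in Hm; lra).
  assert (Hq1 : 1 < q) by (unfold q; assert (0 < 1/m) by (apply Rdiv_lt_0_compat; lra); lra).
  set (t := sigma * N * m / (4 * Rp)).
  assert (Ht : 0 <= t) by (unfold t; apply Rmult_le_pos; [| left; apply Rinv_0_lt_compat; lra];
     apply Rmult_le_pos; [apply Rmult_le_pos|]; lra).
  assert (H2t : 2 * t * (2 * Rp) = sigma * N * m) by (unfold t; field; lra).
  set (Sq := sqrt (t ^ 2 + N ^ 2)).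
  assert (HS0 : 0 <= Sq) by apply sqrt_pos.
  assert (HS2 : Sq * Sq = t ^ 2 + N ^ 2) by (apply sqrt_sqrt; nra).
  assert (HSt : t <= Sq) by nra.
  assert (HSN : N <= Sq) by nra.
  assert (HB : B_const n sigma Rp = t + Sq) by reflexivity.
  rewrite HB in Hk0.
  set (B := t + Sq) in *.
  assert (HBeq : B * B = N * N + 2 * t * B) by (unfold B; nra).
  assert (Hbelow : forall x, 0 <= x -> x <= B -> x * x <= N * N + 2 * t * x).
  { intros x Hx1 Hx2. assert (x - t - Sq <= 0) by (unfold B in *; lra). assert (0 <= x - t + Sq) by lra.
    unfold B in *; nra. }
  assert (Habove : forall x, B < x -> N * N + 2 * t * x < x * x).
  { intros x Hx2. assert (0 < x - t - Sq) by (unfold B in *; lra). assert (0 < x - t + Sq) by lra.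
    unfold B in *; nra. }
  set (a := a_seq n sigma Rp). set (A := A_seq n sigma Rp).
  assert (Hrec : forall k, (2 <= k)%nat ->
     a (Datatypes.S k) = Rmin (q * a k) (sqrt (N * (N + sigma * A k)) / (2 * Rp)) /\
     A (Datatypes.S k) = A k + a (Datatypes.S k)) by (intros; apply aA_S; auto).
  assert (HQ : forall k', (1 <= k')%nat ->
     0 < a (Datatypes.S k') /\ N * a (Datatypes.S k') <= A (Datatypes.S k') /\
     ((2 * Rp * a (Datatypes.S k') = q ^ k' /\ A (Datatypes.S k') = N * a (Datatypes.S k'))
      \/ B <= 2 * Rp * a (Datatypes.S k'))).
  { induction k' as [|k' IH]; intros Hk'; [lia|].
    destruct (Nat.eq_dec k' 0) as [->|Hk'0].
    - assert (Ea : a 2%nat = N / (2 * Rp) / m) by reflexivity.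
      assert (EA : A 2%nat = N / (2 * Rp) + N / (2 * Rp) / m) by reflexivity.
      rewrite Ea, EA. split; [|split].
      + apply Rdiv_lt_0_compat; [apply Rdiv_lt_0_compat|]; lra.
      + right. assert (N - 1 <> 0) by (unfold m in Hm; lra). unfold m. field. split; lra.
      + left. split.
        * rewrite pow_1. assert (N - 1 <> 0) by (unfold m in Hm; lra). unfold q, m. field. split; lra.
        * assert (N - 1 <> 0) by (unfold m in Hm; lra). unfold m. field. split; lra.
    - destruct (IH ltac:(lia)) as [Ha0 [HNA Hcase]].
      destruct (Hrec (Datatypes.S k') ltac:(lia)) as [Ea EA].
      set (kk := Datatypes.S k') in *.
      set (X := N * (N + sigma * A kk)) in *.
      assert (HA0 : 0 <= A kk) by nra.
      assert (HX : N * N <= X) by (unfold X; assert (0 <= N * (sigma * A kk)) by (apply Rmult_le_pos; [lra|apply Rmult_le_pos; lra]); nra).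
      assert (HsX : 0 < sqrt X) by (apply sqrt_lt_R0; nra).
      assert (Hs0 : 0 < sqrt X / (2 * Rp)) by (apply Rdiv_lt_0_compat; lra).
      assert (Ha' : 0 < a (Datatypes.S kk)).
      { rewrite Ea. unfold Rmin; destruct Rle_dec; nra. }
      assert (Hle : a (Datatypes.S kk) <= q * a kk) by (rewrite Ea; apply Rmin_l).
      assert (Hpa : 0 < 2 * Rp * a kk) by (apply Rmult_lt_0_compat; lra).
      assert (Hqpa : 0 < q * (2 * Rp * a kk)) by (apply Rmult_lt_0_compat; lra).
      split; [exact Ha'|split].
      + rewrite EA. assert (Hmm : m * a (Datatypes.S kk) <= m * (q * a kk)) by (apply Rmult_le_compat_l; lra).
        assert (m * (q * a kk) = N * a kk) by (rewrite <- Hqm; ring).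
        assert (N = m + 1) by (unfold m; ring). nra.
      + destruct Hcase as [[Hg1 Hg2] | Hb].
        * destruct (Rle_dec (q * (2 * Rp * a kk)) B) as [Hx|Hx].
          -- assert (Hx2 := Hbelow (q * (2 * Rp * a kk)) ltac:(lra) Hx).
             assert (Hsq : q * (2 * Rp * a kk) <= sqrt X).
             { apply sqrt_ge; [nra|]. unfold X. rewrite Hg2.
               assert (H : 2 * t * (q * (2 * Rp * a kk)) = sigma * N * N * a kk) by
                 (replace (2 * t * (q * (2 * Rp * a kk))) with ((2 * t * (2 * Rp)) * (q * a kk)) by ring;
                  rewrite H2t; rewrite <- Hqm; ring).
               nra. }
             assert (Em : a (Datatypes.S kk) = q * a kk).
             { rewrite Ea. apply Rmin_left.
               apply (Rmult_le_reg_l (2 * Rp)); [lra|].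
               replace (2 * Rp * (sqrt X / (2 * Rp))) with (sqrt X) by (field; lra). lra. }
             left. split.
             ++ rewrite Em. replace (q ^ kk) with (q * q ^ k') by reflexivity. rewrite <- Hg1. ring.
             ++ rewrite EA, Em, Hg2. 
                assert (N + q = N * q) by (rewrite <- Hqm; unfold m in *; unfold q; field; lra).
                nra.
          -- apply Rnot_le_lt in Hx. assert (Hx2 := Habove _ Hx).
             assert (HBs : B <= sqrt X).
             { apply sqrt_ge; [unfold B; lra|]. unfold X. rewrite Hg2. rewrite HBeq.
               assert (H0 : 2 * t * B <= 2 * t * (q * (2 * Rp * a kk))) by (apply Rmult_le_compat_l; lra).
               assert (H : 2 * t * (q * (2 * Rp * a kk)) = sigma * N * N * a kk) by
                 (replace (2 * t * (q * (2 * Rp * a kk))) with ((2 * t * (2 * Rp)) * (q * a kk)) by ring;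
                  rewrite H2t; rewrite <- Hqm; ring).
               nra. }
             right. rewrite Ea. unfold Rmin; destruct Rle_dec.
             ++ lra.
             ++ replace (2 * Rp * (sqrt X / (2 * Rp))) with (sqrt X) by (field; lra). lra.
        * right.
          assert (HBs : B <= sqrt X).
          { apply sqrt_ge; [unfold B; lra|]. rewrite HBeq. unfold X.
            assert (2 * t * B <= sigma * N * m * a kk).
            { rewrite <- H2t. assert (0 <= 2 * t) by lra. 
              replace (2 * t * (2 * Rp) * a kk) with (2 * t * (2 * Rp * a kk)) by ring.
              apply Rmult_le_compat_l; lra. }
            assert (sigma * N * m * a kk <= sigma * N * N * a kk).
            { apply Rmult_le_compat_r; [lra|]. apply Rmult_le_compat_l; nra. }
            assert (sigma * N * N * a kk <= N * sigma * A kk).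
            { replace (sigma * N * N * a kk) with ((sigma * N) * (N * a kk)) by ring.
              replace (N * sigma * A kk) with ((sigma * N) * A kk) by ring.
              apply Rmult_le_compat_l; nra. }
            nra. }
          rewrite Ea. unfold Rmin; destruct Rle_dec.
          ++ nra.
          ++ replace (2 * Rp * (sqrt X / (2 * Rp))) with (sqrt X) by (field; lra). lra. }
  assert (HBN : N <= B) by (unfold B; lra).
  assert (HlnB : 0 < ln B) by (rewrite <- ln_1; apply ln_increasing; lra).
  assert (HL : 0 < ln N - ln m).
  { assert (ln m < ln N) by (apply ln_increasing; unfold m in *; lra). lra. }
  assert (Hlnq : ln q = ln N - ln m).
  { rewrite <- Hqm. rewrite ln_mult by lra. ring. }
  assert (Hk0pos : (0 < k0)%Z).
  { apply lt_0_IZR. assert (0 < ln B / (ln N - ln m)) by (apply Rdiv_lt_0_compat; lra). lra. }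
  set (K0 := Z.to_nat k0).
  assert (HK0 : k0 = Z.of_nat K0) by (unfold K0; lia).
  assert (HK0r : IZR k0 = INR K0) by (rewrite HK0, <- INR_IZR_INZ; reflexivity).
  assert (HK01 : (1 <= K0)%nat) by lia.
  assert (HqK : B <= q ^ K0).
  { destruct (Rle_dec B (q ^ K0)) as [h|h]; [exact h|exfalso].
    apply Rnot_le_lt in h.
    assert (Hqp : 0 < q ^ K0) by (apply pow_lt; lra).
    assert (ln (q ^ K0) < ln B) by (apply ln_increasing; lra).
    rewrite ln_pow in H by lra.
    destruct Hk0 as [_ Hk0u]. rewrite HK0r in Hk0u.
    assert (ln B = (ln B / (ln N - ln m)) * (ln N - ln m)) by (field; lra).
    assert ((ln B / (ln N - ln m)) * (ln N - ln m) <= INR K0 * (ln N - ln m))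
      by (apply Rmult_le_compat_r; lra).
    rewrite Hlnq in H. lra. }
  destruct (HQ K0 HK01) as [_ [HNA0 Hc0]].
  assert (HB0 : B <= 2 * Rp * a (Datatypes.S K0)) by (destruct Hc0 as [[h _]|h]; lra).
  set (c := c_const n sigma Rp).
  assert (Hc : c = m ^ 2 * sigma / ((4 * Rp) ^ 2 * N)) by reflexivity.
  assert (Hc0' : 0 <= c).
  { rewrite Hc. apply Rmult_le_pos; [apply Rmult_le_pos; [apply pow_le; lra| lra]|].
    left. apply Rinv_0_lt_compat. apply Rmult_lt_0_compat; [apply pow_lt|]; lra. }
  assert (HcB : 2 * Rp * (2 * c * N) <= B).
  { assert (E : 2 * Rp * (2 * c * N) = m * (m * sigma / (4 * Rp))) by (rewrite Hc; field; lra).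
    assert (E2 : t = N * (m * sigma / (4 * Rp))) by (unfold t; field; lra).
    assert (0 <= m * sigma / (4 * Rp)) by (apply Rmult_le_pos; [nra|left; apply Rinv_0_lt_compat; lra]).
    assert (m * (m * sigma / (4 * Rp)) <= N * (m * sigma / (4 * Rp))) by (apply Rmult_le_compat_r; [lra | unfold m; lra]).
    unfold B. lra. }
  assert (HP : forall j, A (Datatypes.S K0 + j)%nat >= c * (INR j + N) ^ 2 /\
                         a (Datatypes.S K0 + j)%nat >= 2 * c * (INR j + N)).
  { induction j as [|j [IHA IHa]].
    - rewrite Nat.add_0_r. simpl INR.
      assert (Ha : 2 * c * N <= a (Datatypes.S K0)).
      { apply (Rmult_le_reg_l (2 * Rp)); lra. }
      split; apply Rle_ge.
      + assert (N * (2 * c * N) <= N * a (Datatypes.S K0)) by (apply Rmult_le_compat_l; lra).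
        assert (0 <= c * N * N) by (apply Rmult_le_pos; [apply Rmult_le_pos|]; lra).
        replace ((0 + N) ^ 2) with (N * N) by ring. lra.
      + lra.
    - set (K := (Datatypes.S K0 + j)%nat) in *.
      replace (Datatypes.S K0 + Datatypes.S j)%nat with (Datatypes.S K) by (unfold K; lia).
      destruct (Hrec K ltac:(unfold K; lia)) as [Ea EA].
      rewrite S_INR.
      set (T := INR j + N) in *.
      replace (INR j + 1 + N) with (T + 1) by (unfold T; ring).
      assert (HT : N <= T) by (unfold T; assert (0 <= INR j) by apply pos_INR; lra).
      set (X := N * (N + sigma * A K)) in *.
      assert (Hq1m : (q - 1) * m = 1) by (unfold m in *; lra).
      assert (HqT : T + 1 <= q * T).
      { assert (0 <= (q - 1) * (T - m)) by (apply Rmult_le_pos; unfold m in *; lra). nra. }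
      assert (Ha' : 2 * c * (T + 1) <= a (Datatypes.S K)).
      { rewrite Ea. apply Rmin_glb.
        - assert (2 * c * (T + 1) <= 2 * c * (q * T)) by (apply Rmult_le_compat_l; lra).
          assert (q * (2 * c * T) <= q * a K) by (apply Rmult_le_compat_l; lra).
          nra.
        - set (u := m * sigma / (4 * Rp * N)).
          assert (Hu : 0 <= u) by (unfold u; apply Rmult_le_pos; [nra|left; apply Rinv_0_lt_compat; nra]).
          set (y := u * N * T).
          assert (Hy0 : 0 <= y) by (unfold y; apply Rmult_le_pos; [apply Rmult_le_pos|]; lra).
          assert (Hyc : y * y = N * sigma * (c * T ^ 2)) by (unfold y, u; rewrite Hc; field; lra).
          assert (HA2 : N * sigma * (c * T ^ 2) <= N * sigma * A K).
          { apply Rmult_le_compat_l; [nra|lra]. }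
          assert (HXA : N * sigma * A K <= X).
          { unfold X. assert (0 <= N * N) by nra. nra. }
          assert (Hys : y <= sqrt X) by (apply sqrt_ge; lra).
          assert (E1 : 2 * Rp * (2 * c * (T + 1)) = u * (m * (T + 1))) by (unfold u; rewrite Hc; field; lra).
          assert (Hmt : m * (T + 1) <= N * T) by (unfold m in *; nra).
          assert (u * (m * (T + 1)) <= u * (N * T)) by (apply Rmult_le_compat_l; lra).
          apply (Rmult_le_reg_l (2 * Rp)); [lra|].
          replace (2 * Rp * (sqrt X / (2 * Rp))) with (sqrt X) by (field; lra).
          unfold y in Hys. lra. }
      split; apply Rle_ge; [|lra].
      rewrite EA. assert (0 <= c) by lra. nra. }
  assert (Hkj : (Datatypes.S K0 <= k)%nat) by lia.
  destruct (HP (k - Datatypes.S K0)%nat) as [HA _].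
  replace (Datatypes.S K0 + (k - Datatypes.S K0))%nat with k in HA by lia.
  replace (INR k - IZR k0 + N - 1) with (INR (k - Datatypes.S K0) + N).
  - exact HA.
  - rewrite HK0r, minus_INR by exact Hkj. rewrite S_INR. ring.
Qed.
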